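(* Let $G=\mathbb{Z}_2\times\mathbb{Z}_2$, $\mathcal{L}=\{0,1,2\}$, and $L:G\to\mathcal{L}$ defined by $L((0,0))=0$, $L((0,1))=1$, $L((1,0))=L((1,1))=2$. Then $L$ is friendly.
   Context: For $m\ge3$ let $Z_m=\{(g_1,\dots,g_m)\in G^m: g_1+\cdots+g_{m-1}=g_m\}$, let $\widetilde{L}:Z_m\to\mathcal{L}^m$ be $\widetilde L(g_1,\dots,g_m)=(L(g_1),\dots,L(g_m))$, and let $\pi_i:G^m\to G$ be the $i$-th coordinate projection. $L$ is called $m$-friendly if for every $l=(l_1,\dots,l_m)\in\widetilde{L}(Z_m)$ and every $i=1,\dots,m$ one has $\pi_i(\widetilde{L}^{-1}(l))=L^{-1}(l_i)$. $L$ is friendly if it is $m$-friendly for all $m\ge3$. *)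

(* Defs.v *)
From HB Require Import structures.
From mathcomp Require Import all_boot all_order all_algebra.
Set Implicit Arguments. Unset Strict Implicit. Unset Printing Implicit Defensive.
Import GRing.Theory.
Local Open Scope ring_scope.

(* Z_m : tuples (g_0,...,g_{m-1}) with g_0 + ... + g_{m-2} = g_{m-1}
   (0-based indexing of the paper's g_1,...,g_m). *)
Definition inZ (G : zmodType) (m : nat) (g : 'I_m -> G) : Prop :=
  forall j : 'I_m, nat_of_ord j = m.-1 ->
    \sum_(i < m | (i.+1 < m)%N) g i = g j.

Definition Ltilde_eq (G : zmodType) (Lab : Type) (L : G -> Lab) (m : nat)
  (g : 'I_m -> G) (l : 'I_m -> Lab) : Prop := forall k, L (g k) = l k.

(* m-friendly: for every l in Ltilde(Z_m) and every i,
   pi_i (Ltilde^{-1}(l)) = L^{-1}(l_i) (as subsets of G). *)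
Definition m_friendly (G : zmodType) (Lab : Type) (L : G -> Lab) (m : nat) : Prop :=
  forall l : 'I_m -> Lab,
    (exists g : 'I_m -> G, inZ g /\ Ltilde_eq L g l) ->
    forall (i : 'I_m) (x : G),
      (exists g : 'I_m -> G, [/\ inZ g, Ltilde_eq L g l & g i = x]) <-> L x = l i.

Definition friendly (G : zmodType) (Lab : Type) (L : G -> Lab) : Prop :=
  forall m : nat, (3 <= m)%N -> m_friendly L m.

Definition G4 := ('Z_2 * 'Z_2)%type.
Definition L4 (x : G4) : 'I_3 :=
  if x.1 == 0 then (if x.2 == 0 then inord 0 else inord 1) else inord 2.

(* Main.v *)
Require Import Defs.
From mathcomp Require Import all_boot all_order all_algebra.
Import GRing.Theory.
Local Open Scope ring_scope.

Definition d4 : G4 := (0, 1).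

Lemma lab_fact (x y : G4) : L4 x = L4 y -> x = y \/ (x.1 = 1 /\ y = x + d4).
Proof.
move: x y => [[[|[|n]] ?] [[|[|k]] ?]] [[[|[|n']] ?] [[|[|k']] ?]] //=;
rewrite /L4 /=; try (by left; apply/eqP); try (by right; split; apply/eqP);
move/(congr1 val); rewrite /= !inordK //.
Qed.

Lemma lab_d (x : G4) : x.1 = 1 -> L4 (x + d4) = L4 x.
Proof. by move: x => [[[|[|n]] ?] [[|[|k]] ?]] //= H; rewrite /L4 /=. Qed.

Lemma dbl (x : G4) : x + x = 0.
Proof. by move: x => [[[|[|n]] ?] [[|[|k]] ?]] //; apply/eqP. Qed.

Lemma z2 (z : 'Z_2) : z != 1 -> z = 0.
Proof. by move: z => [[|[|n]] ?] // _; apply/val_inj. Qed.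

Lemma inZ_sum m (g : 'I_m -> G4) : (0 < m)%N -> inZ g <-> \sum_(k < m) g k = 0.
Proof.
move=> hm.
have hj : (m.-1 < m)%N by rewrite prednK.
set j := Ordinal hj.
have E : \sum_(k < m) g k = g j + \sum_(k < m | (k.+1 < m)%N) g k.
  rewrite (bigD1 j) //=; congr (_ + _); apply: eq_bigl => k.
  rewrite -(inj_eq val_inj) /=; have := ltn_ord k; move: (nat_of_ord k) => n hk.
  by rewrite -ltn_predRL ltn_neqAle -ltnS prednK // hk andbT.
rewrite E; split.
- by move=> H; rewrite (H j) // dbl.
- move=> H j' hj'; have -> : j' = j by apply: val_inj.
  set S := \sum_(k < m | _) _ in H *.
  by apply: (addrI (g j)); rewrite H dbl.
Qed.

Lemma fst_sum m (g : 'I_m -> G4) : (\sum_(k < m) g k).1 = \sum_(k < m) (g k).1.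
Proof. by apply: (big_morph (fun x : G4 => x.1)). Qed.

Theorem mainTheorem4 : friendly L4.
Proof.
move=> m hm l [g0 [Z0 E0]] i x; split.
  by case=> g [Z E <-]; rewrite E.
move=> Lx.
have hm0 : (0 < m)%N by apply: leq_trans hm.
have := @lab_fact (g0 i) x; rewrite E0 Lx => /(_ erefl).
case=> [<-|[h1 hx]]; first by exists g0.
have S0 := proj1 (@inZ_sum m g0 hm0) Z0.
case: (pickP (fun j => (j != i) && ((g0 j).1 == 1))) => [j /andP[hji /eqP hj1]|H]; last first.
  have := congr1 (fun y : G4 => y.1) S0; rewrite /= fst_sum (bigD1 i) //= h1.
  rewrite big1 ?addr0; first by [].

  by move=> k hk; apply: z2; move: (H k); rewrite hk; case: eqP.
set g := fun k => if (k == i) || (k == j) then g0 k + d4 else g0 k.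
exists g; split.
- apply/(@inZ_sum m g hm0).
  have -> : \sum_(k < m) g k = \sum_(k < m) g0 k + \sum_(k < m) (if (k == i) || (k == j) then d4 else 0).
    rewrite -big_split; apply: eq_bigr => k _; rewrite /g; case: ifP => _ //.
    by rewrite /= addr0.
  rewrite S0 add0r (bigD1 i) //= eqxx /= (bigD1 j) //= eqxx orbT big1 ?addr0 ?dbl //.
  by move=> k /andP[hk1 hk2]; rewrite (negbTE hk1) (negbTE hk2).
- move=> k; rewrite -E0 /g; case: ifP => // /orP[]/eqP->; apply: lab_d => //.
- by rewrite /g eqxx /= hx.
Qed.
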